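(* Let $(Y,\Gamma)$ be a sutured cobordism from $(F_0,\Lambda_0)$ to $(F_1,\Lambda_1)$, $n_i=\operatorname{rank}H_1(F_i,S_i^+)$, $d=-\chi(Y,R^+)$, $c=n_1-d$. There is a $\mathbb{Z}$-linear map $\mathsf{A}_{\mathbb{Z}}(Y,\Gamma)\colon\wedge^*H_1(F_0,S_0^+)\to\wedge^*H_1(F_1,S_1^+)$, homogeneous of degree $c$ and unique up to an overall sign, such that for all $x\in\wedge^*H_1(F_0,S_0^+)$ and $y\in\wedge^*H_1(F_1,S_1^+)$, \[\omega\big(\wedge(\mathsf{A}_{\mathbb{Z}}(Y,\Gamma)\otimes\mathrm{id})(x\otimes y)\big)=\mathcal{A}^{\mathbb{Z}}_{Y,\Gamma}(i_*x\wedge i_*y),\] where $\omega\colon\wedge^{n_1}H_1(F_1,S_1^+)\to\mathbb{Z}$ is any volume form, $\wedge\colon\wedge^pH_1(F_1,S_1^+)\otimes\wedge^qH_1(F_1,S_1^+)\to\wedge^{n_1}H_1(F_1,S_1^+)$ is $z\otimes w\mapsto z\wedge w$ if $p+q=n_1$ and $0$ otherwise, $(\mathsf{A}\otimes\mathrm{id})(x\otimes y)=(-1)^{c|y|}\mathsf{A}(x)\otimes y$, and $\mathcal{A}^{\mathbb{Z}}_{Y,\Gamma}$ is extended by $0$ on $\wedge^{d'}H_1(Y,R^+)$ for $d'\ne d$. Moreover, changing the volume form changes $\mathsf{A}_{\mathbb{Z}}(Y,\Gamma)$ only by a global sign.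
   Context: A sutured surface $(F,\Lambda)$: compact oriented surface with finite $\Lambda\subset\partial F$ dividing $\partial F$ into alternating $S^+,S^-$, each component meeting both. A sutured cobordism $(Y,\Gamma)$ from $(F_0,\Lambda_0)$ to $(F_1,\Lambda_1)$: compact oriented 3-manifold with $F_1\sqcup-F_0\hookrightarrow\partial Y$ and arcs/circles $\Gamma$ on the rest of $\partial Y$, $\partial\Gamma=\Lambda_1\sqcup\Lambda_0$, dividing it into alternating $R^+,R^-$ with $R^\pm\cap F_i=S_i^\pm$, each component meeting $R^+$ and $R^-$. $H_1(F_i,S_i^+)$ is free abelian; $i_*\colon H_1(F_i,S_i^+)\to H_1(Y,R^+)$ is induced by inclusion and extended to exterior powers. The Alexander function $\mathcal{A}^{\mathbb{Z}}_{Y,\Gamma}\colon\wedge^dH_1(Y,R^+)\to\mathbb{Z}$ (defined up to global sign) is $0$ if $H_2(Y,R^+)\ne0$; otherwise, choosing an injective presentation matrix $P$ of deficiency $d$ for $H_1(Y,R^+)$ (one exists in this case), $\mathcal{A}^{\mathbb{Z}}_{Y,\Gamma}(u_1\wedge\cdots\wedge u_d)=\det[P\,|\,\bar u_1\cdots\bar u_d]$ with $\bar u_j$ any lifts of $u_j$ to the generators, appended as columns. *)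

(* Defs.v *)
From HB Require Import structures.
From mathcomp Require Import all_boot all_order all_algebra.
Set Implicit Arguments. Unset Strict Implicit. Unset Printing Implicit Defensive.
Import Order.TTheory GRing.Theory Num.Theory.
Local Open Scope ring_scope.

(* The exterior algebra /\^* Z^n of the free abelian group Z^n with basis
   e_0 < ... < e_(n-1): an element is given by its coordinates on the basis
   e_S := e_(s_1) /\ ... /\ e_(s_k), S = {s_1 < ... < s_k} \subset 'I_n.
   The degree-k part consists of the coordinates on sets with #|S| = k. *)
Definition ext (n : nat) := {set 'I_n} -> int.

Definition basis_vec n (T : {set 'I_n}) : ext n := fun V => (V == T)%:R.

(* e_S /\ e_T = wsign S T * e_(S :|: T) when S, T are disjoint *)
Definition wsign n (S T : {set 'I_n}) : int :=
  (-1) ^+ #|[set p : 'I_n * 'I_n |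
              [&& p.1 \in S, p.2 \in T & (nat_of_ord p.2 < nat_of_ord p.1)%N]]|.

Definition wedge n (z w : ext n) : ext n := fun U =>
  \sum_(S : {set 'I_n}) \sum_(T : {set 'I_n})
     (if [disjoint S & T] && (S :|: T == U) then wsign S T * z S * w T else 0).

(* the map  /\ : /\^p (x) /\^q -> /\^n,  z (x) w |-> z /\ w if p + q = n, 0
   otherwise (extended bilinearly to all degrees): keep the top-degree part *)
Definition wedge_top n (z w : ext n) : ext n := fun U =>
  if U == setT then wedge z w U else 0.

(* volume forms on /\^n Z^n (an isomorphism /\^n Z^n -> Z): v |-> om * v_[n]
   with om = 1 or -1 *)
Definition is_volume_form (om : int) : bool := (om == 1) || (om == -1).
Definition vol n (om : int) (v : ext n) : int := om * v setT.

(* a Z-linear map /\^* Z^n0 -> /\^* Z^n1 given by its matrix A S U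
   (coefficient of e_U in the image of e_S) *)
Definition applyA n0 n1 (A : {set 'I_n0} -> {set 'I_n1} -> int) (x : ext n0)
  : ext n1 := fun U => \sum_(S : {set 'I_n0}) x S * A S U.

Definition homogeneous n0 n1 (c : int) (A : {set 'I_n0} -> {set 'I_n1} -> int)
  : Prop := forall S U, A S U != 0 -> #|U|%:Z = #|S|%:Z + c.

Definition tensor_sign (c : int) (k : nat) : int := (-1) ^+ absz (c * k%:Z).

(* omega( /\ ((A (x) id)(x (x) y)) ), where (A (x) id)(x (x) e_T) =
   (-1)^(c |T|) A(x) (x) e_T, extended linearly in y *)
Definition pairing_lhs n0 n1 (c om : int) (A : {set 'I_n0} -> {set 'I_n1} -> int)
  (x : ext n0) (y : ext n1) : int :=
  \sum_(T : {set 'I_n1})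
     y T * tensor_sign c #|T| * vol om (wedge_top (applyA A x) (basis_vec T)).

(* The composite (S,T) |-> A^Z_{Y,Gamma}(i_* e_S /\ i_* e_T), extended
   bilinearly: x,y |-> A^Z_{Y,Gamma}(i_* x /\ i_* y). *)
Definition alex_ext n0 n1 (alex : {set 'I_n0} -> {set 'I_n1} -> int)
  (x : ext n0) (y : ext n1) : int :=
  \sum_(S : {set 'I_n0}) \sum_(T : {set 'I_n1}) x S * y T * alex S T.

(* H_1(Y,R^+) = coker P for P : Z^r -> Z^m; L0, L1 : columns are lifts to
   the generators Z^m of i_* of the basis vectors of H_1(F_i,S_i^+).
   det [P | lifts of i_* e_S | lifts of i_* e_T] (0 if the number of
   columns is not m, i.e. if #|S| + #|T| <> d = m - r). *)
Definition alex_det m r n0 n1 (P : 'M[int]_(m, r)) (L0 : 'M[int]_(m, n0))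
  (L1 : 'M[int]_(m, n1)) (S : {set 'I_n0}) (T : {set 'I_n1}) : int :=
  let cols := [seq col j P | j <- enum 'I_r] ++ [seq col i L0 | i <- enum S]
              ++ [seq col i L1 | i <- enum T] in
  if size cols == m then \det (\matrix_(i < m, j < m) (nth 0 cols j) i ord0)
  else 0.

(* The Alexander function of (Y,Gamma), composed with i_*: either 0 (the case
   H_2(Y,R^+) <> 0) or given by an injective presentation matrix of
   deficiency d of H_1(Y,R^+). *)
Definition alexander_composite n0 n1 (d : int)
  (alex : {set 'I_n0} -> {set 'I_n1} -> int) : Prop :=
  (forall S T, alex S T = 0) \/
  exists (m r : nat) (P : 'M[int]_(m, r)) (L0 : 'M[int]_(m, n0))
         (L1 : 'M[int]_(m, n1)),
    [/\ m%:Z = r%:Z + d,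
        (forall v : 'cV[int]_r, P *m v = 0 -> v = 0)
      & forall S T, alex S T = alex_det P L0 L1 S T].

(* Main.v *)
Require Import Defs.
From HB Require Import structures.
From mathcomp Require Import all_boot all_order all_algebra.
From mathcomp Require Import zify ring.
Import Order.TTheory GRing.Theory Num.Theory.
Local Open Scope ring_scope.

Lemma sign_sq (k : nat) : ((-1 : int) ^+ k) * ((-1) ^+ k) = 1.
Proof. by rewrite -exprMn mulrNN mulr1 expr1n. Qed.

Lemma wsign_sq n (S T : {set 'I_n}) : wsign S T * wsign S T = 1.
Proof. exact: sign_sq. Qed.

Lemma tsign_sq c k : tensor_sign c k * tensor_sign c k = 1.
Proof. exact: sign_sq. Qed.

Lemma vol_sq om : is_volume_form om -> om * om = 1.
Proof. by case/orP => /eqP ->. Qed.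

Lemma compl_iff n (S T : {set 'I_n}) :
  ([disjoint S & T] && (S :|: T == setT)) = (S == ~: T).
Proof.
apply/idP/eqP.
  case/andP => Hd /eqP Hu; apply/setP => x; rewrite in_setC.
  have := in_setT x; rewrite -Hu in_setU.
  case: (boolP (x \in T)) => xT; last by rewrite orbF.
  by rewrite orbT (disjointFl Hd xT).
move=> ->; rewrite setUC setUCr eqxx andbT.
by rewrite disjoints_subset subxx.
Qed.

Lemma wt n (z : ext n) (T0 : {set 'I_n}) :
  wedge_top z (basis_vec T0) setT = wsign (~: T0) T0 * z (~: T0).
Proof.
rewrite /wedge_top eqxx /wedge.
rewrite (bigD1 (~: T0)) //= [X in _ + X]big1 ?addr0.
  rewrite (bigD1 T0) //= [X in _ + X]big1 ?addr0.
    by rewrite compl_iff eqxx /basis_vec eqxx mulr1.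
  move=> T /negbTE HT; rewrite /basis_vec HT mulr0; by case: ifP.
move=> S /negbTE HS; apply: big1 => T _.
case: ifP => // /andP [Hd Hu].
have : S == ~: T by rewrite -compl_iff Hd Hu.
move=> /eqP HS'; subst S.
rewrite /basis_vec; case: (eqVneq T T0) => [E|_]; last by rewrite mulr0.
by subst T; rewrite eqxx in HS.
Qed.

Lemma pairing_basis n0 n1 c om (A : {set 'I_n0} -> {set 'I_n1} -> int)
  (S : {set 'I_n0}) (T : {set 'I_n1}) :
  pairing_lhs c om A (basis_vec S) (basis_vec T) =
  tensor_sign c #|T| * (om * (wsign (~: T) T * A S (~: T))).
Proof.
rewrite /pairing_lhs (bigD1 T) //= [X in _ + X]big1 ?addr0.
  rewrite /basis_vec eqxx mul1r /vol wt /applyA.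
  rewrite (bigD1 S) //= [X in _ + X]big1 ?addr0; first by rewrite eqxx mul1r.
  by move=> S' /negbTE H; rewrite H mul0r.
by move=> T' /negbTE H; rewrite /basis_vec H !mul0r.
Qed.

Lemma alex_basis n0 n1 (alex : {set 'I_n0} -> {set 'I_n1} -> int) S T :
  alex_ext alex (basis_vec S) (basis_vec T) = alex S T.
Proof.
rewrite /alex_ext (bigD1 S) //= [X in _ + X]big1 ?addr0.
  rewrite (bigD1 T) //= [X in _ + X]big1 ?addr0; first by rewrite /basis_vec !eqxx !mul1r.
  by move=> T' /negbTE H; rewrite /basis_vec H mulr0 mul0r.
move=> S' /negbTE H; apply: big1 => T' _; by rewrite /basis_vec H !mul0r.
Qed.

Theorem proposition5p5 (n0 n1 : nat) (d : int)
  (alex : {set 'I_n0} -> {set 'I_n1} -> int)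
  (Halex : alexander_composite d alex)
  (om : int) (Hom : is_volume_form om) :
  let c := n1%:Z - d in
  exists A : {set 'I_n0} -> {set 'I_n1} -> int,
    [/\ homogeneous c A,
        (forall x y, pairing_lhs c om A x y = alex_ext alex x y)
      & (forall (om' : int) (A' : {set 'I_n0} -> {set 'I_n1} -> int),
           is_volume_form om' -> homogeneous c A' ->
           ((forall x y, pairing_lhs c om' A' x y = alex_ext alex x y) \/
            (forall x y, pairing_lhs c om' A' x y = - alex_ext alex x y)) ->
           exists eps : int, is_volume_form eps /\
             (forall S U, A' S U = eps * A S U))].
Proof.
move=> c.
pose A := fun (S : {set 'I_n0}) (U : {set 'I_n1}) =>
  om * (tensor_sign c #|~: U| * wsign U (~: U)) * alex S (~: U).
exists A; split.
- move=> S U; rewrite /A => H.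
  have H2 : alex S (~: U) != 0.
    by apply: contraNneq H => ->; rewrite mulr0.
  case: Halex => [H0|[m [r [P [L0 [L1 [Hm _ Hd]]]]]]].
    by rewrite H0 eqxx in H2.
  move: H2; rewrite Hd /alex_det; case: ifP; last by rewrite eqxx.
  rewrite !size_cat !size_map -?enumT size_enum_ord -!cardE => /eqP Hs _.
  have HC := cardsC U; rewrite card_ord in HC.
  have HC' : (n1:int) = (#|U| : int) + #|~: U| by rewrite -PoszD HC.
  have Hd' : d = (#|S| : int) + #|~: U|.
    by apply: (addrI (r:int)); rewrite -Hm -Hs !PoszD.
  rewrite /c HC' Hd'; ring.
- move=> x y; rewrite /pairing_lhs /alex_ext exchange_big /=.
  apply: eq_bigr => T _; rewrite /vol wt /applyA.
  rewrite !big_distrr /=; apply: eq_bigr => S _.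
  rewrite /A setCK.
  have h1 := tsign_sq c #|T|; have h2 := wsign_sq _ (~: T) T;
  have h3 := vol_sq _ Hom.
  set ts := tensor_sign _ _ in h1 *; set w := wsign _ _ in h2 *.
  transitivity ((ts * ts) * (w * w) * (om * om) * (x S * y T * alex S T));
    first by ring.
  by rewrite h1 h2 h3 !mul1r.
- move=> om' A' Hom' _ Hor.
  have key : exists2 sg : int, is_volume_form sg &
     forall S T, pairing_lhs c om' A' (basis_vec S) (basis_vec T) =
                 sg * alex S T.
    case: Hor => H; [exists 1 | exists (-1)] => // S T;
      by rewrite H alex_basis ?mul1r ?mulN1r.
  case: key => sg Hsg Hk.
  exists (sg * om' * om); split.
    by case/orP: Hsg => /eqP->; case/orP: Hom' => /eqP->; case/orP: Hom => /eqP->.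
  move=> S U; have := Hk S (~: U); rewrite pairing_basis setCK /A.
  have h1 := tsign_sq c #|~: U|; have h2 := wsign_sq _ U (~: U).
  have h3 := vol_sq _ Hom; have h4 := vol_sq _ Hom'.
  set ts := tensor_sign _ _ in h1 *; set w := wsign _ _ in h2 *.
  move=> E.
  transitivity ((ts * ts) * (w * w) * (om' * om') * A' S U);
    first by rewrite h1 h2 h4 !mul1r.
  transitivity (om' * ts * w * (ts * (om' * (w * A' S U)))); first by ring.
  rewrite E.
  transitivity ((om * om) * (om' * ts * w * (sg * alex S (~: U))));
    first by rewrite h3 mul1r.
  ring.
Qed.
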